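(* Let $\mathcal{L}$ be a set of graphs. For all graphs $G_1,G_2$: $G_1\cong^{\mathbf{G}}_{\mathcal{L}}G_2$ iff $G_1$ and $G_2$ have the same sort and, for all graphs $G$, all finite permutations $\alpha$ of $\mathbb{S}$ and all finite $\tau\subseteq\mathbb{S}$, $\mathsf{rename}_\alpha(\mathsf{restrict}_\tau(G_1\parallel G))\in\mathcal{L}\iff\mathsf{rename}_\alpha(\mathsf{restrict}_\tau(G_2\parallel G))\in\mathcal{L}$.
   Context: Graphs over a countably infinite set $\mathbb{S}$ of source labels and a set $\mathbb{A}$ of edge labels: isomorphism classes of finite $\mathbb{A}$-labelled hypergraphs with an injective map $\xi$ from a finite sort $\tau\subseteq\mathbb{S}$ into the vertices. The HR algebra $\mathbf{G}$: sorts are finite subsets of $\mathbb{S}$; operations $\mathbf{0}_\tau$ (one $s$-source per $s\in\tau$), $\mathbf{a}_{(s_1,\ldots,s_{\#a})}$ (single $a$-edge on these sources), $\mathsf{restrict}_\tau$ (on sort $\tau'$, removes source labels in $\tau'\setminus\tau$, keeping vertices; result sort $\tau\cap\tau'$), $\mathsf{rename}_\alpha$ ($\alpha$ finite permutation; source map becomes $\xi\circ\alpha$, sort $\alpha^{-1}(\tau)$), $\parallel$ (disjoint union fusing the two $s$-sources for each common label $s$). The syntactic congruence $\cong^{\mathbf{A}}_{\mathcal{L}}$ of a set $\mathcal{L}$ in an algebra $\mathbf{A}$ relates $a,b$ iff they have the same sort and for every first-order term $t(x,y_1,\ldots,y_k)$ over the signature of $\mathbf{A}$ and all elements $c_1,\ldots,c_k$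 of matching sorts, $t^{\mathbf{A}}(a,\bar c)\in\mathcal{L}\iff t^{\mathbf{A}}(b,\bar c)\in\mathcal{L}$. *)

(* Defs.v *)
From mathcomp Require Import all_boot.
Set Implicit Arguments. Unset Strict Implicit. Unset Printing Implicit Defensive.

(* Source labels S := nat (countably infinite).  A concrete graph:
   vertices 0 .. gv-1, a list of labelled hyperedges (label, attachment list),
   and the source map xi as a list of pairs (source label, vertex). *)
Record graph (A : Type) := Graph {
  gv : nat;
  ge : seq (A * seq nat);
  gs : seq (nat * nat) }.

Record finperm := FinPerm {
  fp : nat -> nat;
  fp_inv : nat -> nat;
  fp_K : cancel fp fp_inv;
  fp_Kinv : cancel fp_inv fp;
  fp_fin : exists n, forall s, n <= s -> fp s = s }.

Section HR.
Variables (A : eqType) (ar : A -> nat).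

Definition wf (G : graph A) : Prop :=
  [/\ all (fun e => size e.2 == ar e.1) (ge G),
      all (fun e => all (fun v => v < gv G) e.2) (ge G),
      all (fun p => p.2 < gv G) (gs G),
      uniq (unzip1 (gs G)) & uniq (unzip2 (gs G))].

(* the sort of G, as a finite set of labels (compared extensionally) *)
Definition labels (G : graph A) : seq nat := unzip1 (gs G).
Definition same_sort (G H : graph A) : Prop := labels G =i labels H.

Definition iso (G H : graph A) : Prop :=
  exists f : nat -> nat,
  [/\ gv G = gv H,
      forall v, v < gv G -> f v < gv H,
      forall u v, u < gv G -> v < gv G -> f u = f v -> u = v,
      perm_eq [seq (e.1, map f e.2) | e <- ge G] (ge H)
    & perm_eq [seq (p.1, f p.2) | p <- gs G] (gs H)].

(* a "set of graphs" = a set of isomorphism classes *)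
Definition iso_invariant (L : graph A -> Prop) : Prop :=
  forall G H, wf G -> wf H -> iso G H -> L G -> L H.

Definition zero_g (tau : seq nat) : graph A :=
  let u := undup tau in Graph (size u) [::] (zip u (iota 0 (size u))).

Definition edge_g (a : A) (ss : seq nat) : graph A :=
  let u := undup ss in
  Graph (size u) [:: (a, [seq index s u | s <- ss])] (zip u (iota 0 (size u))).

Definition restrict_g (tau : seq nat) (G : graph A) : graph A :=
  Graph (gv G) (ge G) [seq p <- gs G | p.1 \in tau].

(* new source map is xi o alpha: label s' is mapped to xi (alpha s') *)
Definition rename_g (al : finperm) (G : graph A) : graph A :=
  Graph (gv G) (ge G) [seq (fp_inv al p.1, p.2) | p <- gs G].

Definition src_lookup (G : graph A) (s : nat) : option nat :=
  if s \in unzip1 (gs G) then Some (nth 0 (unzip2 (gs G)) (index s (unzip1 (gs G))))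
  else None.

Definition label_of (G : graph A) (v : nat) : option nat :=
  if v \in unzip2 (gs G) then Some (nth 0 (unzip1 (gs G)) (index v (unzip2 (gs G))))
  else None.

(* Vertices of G keep their numbers; a vertex of H that is an s-source with
   s a label of G goes to the s-source of G; the other vertices of H are
   renumbered after those of G. *)
Definition par_g (G H : graph A) : graph A :=
  let fused v := match label_of H v with
                 | Some s => src_lookup G s | None => None end in
  let fresh v := fused v == None in
  let h v := match fused v with
             | Some w => w
             | None => gv G + count fresh (iota 0 v) end in
  Graph (gv G + count fresh (iota 0 (gv H)))
        (ge G ++ [seq (e.1, map h e.2) | e <- ge H])
        (gs G ++ [seq (p.1, h p.2) | p <- gs H & p.1 \notin labels G]).

Inductive term :=
| TVar of nat
| TZero of seq nat
| TEdge (a : A) of (ar a).-tuple nat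
| TRestrict of seq nat & term
| TRename of finperm & term
| TPar of term & term.

Fixpoint eval (env : nat -> graph A) (t : term) : graph A :=
  match t with
  | TVar i => env i
  | TZero tau => zero_g tau
  | TEdge a ss => edge_g a ss
  | TRestrict tau t1 => restrict_g tau (eval env t1)
  | TRename al t1 => rename_g al (eval env t1)
  | TPar t1 t2 => par_g (eval env t1) (eval env t2)
  end.

(* environment: variable 0 is x, variables i >= 1 are the y_i *)
Definition env_of (x : graph A) (c : nat -> graph A) (i : nat) : graph A :=
  if i == 0 then x else c i.

Definition syn_cong (L : graph A -> Prop) (G1 G2 : graph A) : Prop :=
  same_sort G1 G2 /\
  forall (t : term) (c : nat -> graph A), (forall i, wf (c i)) ->
    (L (eval (env_of G1 c) t) <-> L (eval (env_of G2 c) t)).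

End HR.

(* Main.v *)
Require Import Defs.
From mathcomp Require Import all_boot zify.
Set Implicit Arguments. Unset Strict Implicit. Unset Printing Implicit Defensive.

Section Basics.
Variables (A : eqType) (ar : A -> nat).
Implicit Types (G H X Y Z W : graph A).

Lemma uniq_fst (T1 T2 : eqType) (s : seq (T1 * T2)) : uniq (unzip1 s) -> uniq s.
Proof. by move/map_uniq. Qed.

Lemma src_lookupP G s v : uniq (unzip1 (gs G)) ->
  (src_lookup G s == Some v) = ((s, v) \in gs G).
Proof.
rewrite /src_lookup; elim: (gs G) => [|[a b] l IH] //=.
rewrite in_cons /= => /andP[na ul].
case: (eqVneq s a) => [->|nsa] /=.
  rewrite in_cons; apply/idP/idP => [/eqP[->]|]; first by rewrite eqxx.
  case/orP => [/eqP[->]//|/(map_f fst)/= ]; by rewrite (negbTE na).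
by rewrite in_cons -pair_eqE /= (negbTE nsa) /= IH.
Qed.

Lemma src_lookupN G s : (src_lookup G s == None) = (s \notin labels G).
Proof. by rewrite /src_lookup /labels; case: ifP. Qed.

Lemma label_ofP G s v : uniq (unzip2 (gs G)) ->
  (label_of G v == Some s) = ((s, v) \in gs G).
Proof.
rewrite /label_of; elim: (gs G) => [|[a b] l IH] //=.
rewrite in_cons /= => /andP[na ul].
case: (eqVneq v b) => [->|nvb] /=.
  rewrite in_cons; apply/idP/idP => [/eqP[->]|]; first by rewrite eqxx.
  case/orP => [/eqP[->]//|/(map_f snd)/= ]; by rewrite (negbTE na).
by rewrite in_cons -pair_eqE /= (negbTE nvb) andbF /= IH.
Qed.

Lemma label_ofN G v : (label_of G v == None) = (v \notin unzip2 (gs G)).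
Proof. by rewrite /label_of; case: ifP. Qed.

Lemma label_of_lab G v s : label_of G v = Some s -> s \in labels G.
Proof.
rewrite /label_of /labels; case: ifP => // vin [<-].
apply: mem_nth; rewrite size_map -(size_map snd) index_mem //.
Qed.


Lemma opt_eq (o1 o2 : option nat) :
  (forall v, (o1 == Some v) = (o2 == Some v)) -> o1 = o2.
Proof.
case: o1 => [a|]; case: o2 => [b|] // H.
- by move: (H a); rewrite eqxx => /esym/eqP[->].
- by move: (H a); rewrite eqxx.
- by move: (H b); rewrite eqxx.
Qed.

Lemma map_filter_ext (T U : Type) (f1 f2 : T -> U) (a1 a2 : pred T) s :
  f1 =1 f2 -> a1 =1 a2 -> map f1 (filter a1 s) = map f2 (filter a2 s).
Proof. by move=> h1 h2; rewrite (eq_filter h2) (eq_map h1). Qed.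

Lemma mem_labels_res sg G x :
  (x \in labels (restrict_g sg G)) = (x \in labels G) && (x \in sg).
Proof.
rewrite /labels /=; elim: (gs G) => [|p l IH] //=.
case: ifP => /= psg; rewrite !in_cons IH; first by case: eqP => // ->; rewrite psg.
by case: eqP => // ->; rewrite psg !andbF.
Qed.

Lemma uniq_map_inj (T U : eqType) (f : T -> U) s x y :
  uniq (map f s) -> x \in s -> y \in s -> f x = f y -> x = y.
Proof.
elim: s => //= a s IH /andP[na u]; rewrite !in_cons.
case/orP => [/eqP->|xs]; case/orP => [/eqP->|ys] e //.
- by move: na; rewrite e map_f.
- by move: na; rewrite -e map_f.
- exact: IH.
Qed.

Lemma map_filter_ext_in (T : eqType) (U : Type) (f1 f2 : T -> U) (a1 a2 : pred T) s :
  {in s, f1 =1 f2} -> {in s, a1 =1 a2} -> map f1 (filter a1 s) = map f2 (filter a2 s).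
Proof.
move=> h1 h2; rewrite (eq_in_filter h2); apply/eq_in_map => x.
by rewrite mem_filter => /andP[_ /h1].
Qed.

Definition fusedf G H v := match label_of H v with
  | Some s => src_lookup G s | None => None end.
Definition freshf G H v := fusedf G H v == None.
Definition hf G H v := match fusedf G H v with
  | Some w => w | None => gv G + count (freshf G H) (iota 0 v) end.

Lemma par_gE G H : par_g G H =
  Graph (gv G + count (freshf G H) (iota 0 (gv H)))
        (ge G ++ [seq (e.1, map (hf G H) e.2) | e <- ge H])
        (gs G ++ [seq (p.1, hf G H p.2) | p <- gs H & p.1 \notin labels G]).
Proof. by []. Qed.

Lemma hf_ext G H G' H' : gv G = gv G' -> fusedf G H =1 fusedf G' H' ->
  hf G H =1 hf G' H'.
Proof.
move=> eg ef v; rewrite /hf ef eg; case: (fusedf G' H' v) => // .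
by congr (_ + _); apply: eq_count => x; rewrite /freshf ef.
Qed.

Lemma labels_ren al G : labels (rename_g al G) = map (fp_inv al) (labels G).
Proof. by rewrite /labels /=; elim: (gs G) => //= p l ->. Qed.

Lemma unzip2_ren al G : unzip2 (gs (rename_g al G)) = unzip2 (gs G).
Proof. by rewrite /=; elim: (gs G) => //= p l ->. Qed.

Lemma label_of_ren al G v :
  label_of (rename_g al G) v = omap (fp_inv al) (label_of G v).
Proof.
rewrite /label_of unzip2_ren; case: ifP => // vin /=.
rewrite (labels_ren al G : unzip1 _ = _) (nth_map 0) //.
by rewrite /labels size_map -(size_map snd) index_mem.
Qed.

Lemma src_lookup_ren al G s :
  src_lookup (rename_g al G) s = src_lookup G (fp al s).
Proof.
rewrite /src_lookup (labels_ren al G : unzip1 _ = _) unzip2_ren -/(labels G).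
have -> : s = fp_inv al (fp al s) by rewrite fp_K.
rewrite mem_map; last exact: can_inj (fp_Kinv al).
rewrite index_map; last exact: can_inj (fp_Kinv al).
by rewrite fp_Kinv.
Qed.

Lemma src_lookup_res tau G s : uniq (labels G) ->
  src_lookup (restrict_g tau G) s = if s \in tau then src_lookup G s else None.
Proof.
move=> u.
have u' : uniq (unzip1 (gs (restrict_g tau G))).
  by rewrite /= /unzip1 -filter_map filter_uniq.
apply: opt_eq => v; rewrite src_lookupP //=.
rewrite mem_filter /=; case: ifP => _ //=.
by rewrite src_lookupP.
Qed.

Definition fp_id : finperm :=
  @FinPerm id id (fun _ => erefl) (fun _ => erefl) (ex_intro _ 0 (fun _ _ => erefl)).

Lemma fp_comp_proof (a g : finperm) :
  exists n, forall s, n <= s -> fp g (fp a s) = s.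
Proof.
case: (fp_fin a) => n1 h1; case: (fp_fin g) => n2 h2.
exists (maxn n1 n2) => s; rewrite geq_max => /andP[l1 l2].
by rewrite h1 // h2.
Qed.

Definition fp_comp (a g : finperm) : finperm :=
  @FinPerm (fun s => fp g (fp a s)) (fun s => fp_inv a (fp_inv g s))
    (fun s => etrans (f_equal (fp_inv a) (fp_K g (fp a s))) (fp_K a s))
    (fun s => etrans (f_equal (fp g) (fp_Kinv a (fp_inv g s))) (fp_Kinv g s))
    (fp_comp_proof a g).

Lemma fp_finv_proof (g : finperm) : exists n, forall s, n <= s -> fp_inv g s = s.
Proof.
case: (fp_fin g) => n h; exists n => s ns.
by rewrite -{1}(h s ns) fp_K.
Qed.

Definition fp_finv (g : finperm) : finperm :=
  @FinPerm (fp_inv g) (fp g) (fp_Kinv g) (fp_K g) (fp_finv_proof g).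

Lemma ren_ren a g W : rename_g a (rename_g g W) = rename_g (fp_comp a g) W.
Proof. by rewrite /rename_g /= -map_comp. Qed.

Lemma res_ren tau g W :
  restrict_g tau (rename_g g W) = rename_g g (restrict_g (map (fp g) tau) W).
Proof.
rewrite /rename_g /restrict_g /= filter_map; congr (Graph _ _ (map _ _)).
apply: eq_filter => p /=.
rewrite -{2}(fp_Kinv g p.1) mem_map //; exact: can_inj (fp_K g).
Qed.

Lemma res_res tau sg W :
  restrict_g tau (restrict_g sg W) = restrict_g [seq s <- tau | s \in sg] W.
Proof.
rewrite /restrict_g /= -filter_predI; congr (Graph _ _ _).
by apply: eq_filter => p /=; rewrite mem_filter andbC.
Qed.


Lemma ren_par g X G :
  par_g (rename_g g X) G = rename_g g (par_g X (rename_g (fp_finv g) G)).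
Proof.
have ef : fusedf (rename_g g X) G =1 fusedf X (rename_g (fp_finv g) G).
  move=> v; rewrite /fusedf label_of_ren /=.
  by case: (label_of G v) => //= s; rewrite src_lookup_ren.
have eh := hf_ext (G:=rename_g g X) (G':=X) erefl ef.
rewrite !par_gE /rename_g /=; congr Graph.
- by congr (_ + _); apply: eq_count => v; rewrite /freshf ef.
- by congr (_ ++ _); apply: eq_map => e /=; rewrite (eq_map eh).
rewrite map_cat; congr (_ ++ _).
rewrite filter_map -!map_comp; apply: map_filter_ext => p /=.
  by rewrite fp_K eh.
rewrite -/(rename_g g X) labels_ren -{1}(fp_K g p.1) mem_map //.
exact: can_inj (fp_Kinv g).
Qed.


Definition swapf N (D : seq nat) s :=
  if s < N then (if s \in D then s + N else s)
  else if s < N + N then (if (s - N) \in D then s - N else s) else s.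

Lemma swapfK N D : involutive (swapf N D).
Proof.
move=> s; rewrite /swapf.
case: (ltnP s N) => sN.
  case: (boolP (s \in D)) => sD; last by rewrite sN (negbTE sD).
  have h1 : (s + N < N) = false by apply/negbTE; rewrite -leqNgt leq_addl.
  have h2 : s + N < N + N by rewrite ltn_add2r.
  by rewrite h1 h2 addnK sD.
have sN' := leq_gtF sN.
case: (ltnP s (N + N)) => s2N; last by rewrite sN' (leq_gtF s2N).
case: (boolP (s - N \in D)) => sD; last by rewrite sN' s2N (negbTE sD).
have -> : s - N < N by rewrite ltn_subLR.
by rewrite sD subnK.
Qed.

Lemma swapf_fin N D : exists n, forall s, n <= s -> swapf N D s = s.
Proof.
exists (N + N) => s h; rewrite /swapf ltnNge (leq_trans (leq_addr N N) h) /=.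
by rewrite ltnNge h.
Qed.

Definition fp_swap N D : finperm :=
  @FinPerm (swapf N D) (swapf N D) (swapfK N D) (swapfK N D) (swapf_fin N D).

Lemma swapf_small N D s : s < N -> swapf N D s = if s \in D then s + N else s.
Proof. by rewrite /swapf => ->. Qed.

Lemma swap_key N (S sg L : seq nat) s :
  L =i S -> (forall x, x \in S -> x < N) -> s < N ->
  (swapf N [seq x <- S | x \notin sg] s \in L) = (s \in S) && (s \in sg).
Proof.
move=> eL hS sN; rewrite swapf_small // mem_filter eL.
case: (boolP (s \in sg)) => hs /=; first by rewrite andbT.
rewrite andbF; case: ifP => sS //.
by apply/negP => /hS; rewrite ltnNge leq_addl.
Qed.


Lemma res_par sg X G (S : seq nat) N :
  uniq (labels X) -> labels X =i S -> (forall x, x \in S -> x < N) ->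
  (forall x, x \in labels G -> x < N) ->
  par_g (restrict_g sg X) G =
  rename_g (fp_swap N [seq x <- S | x \notin sg])
    (restrict_g ([seq x <- S | x \in sg] ++
                 map (swapf N [seq x <- S | x \notin sg]) (labels G))
       (par_g X (rename_g (fp_swap N [seq x <- S | x \notin sg]) G))).
Proof.
move=> uX eX hS hG.
set D := [seq x <- S | x \notin sg]; set b := fp_swap N D.
have ef : fusedf (restrict_g sg X) G =1 fusedf X (rename_g b G).
  move=> v; rewrite /fusedf label_of_ren.
  case E: (label_of G v) => [s|] //=.
  have sN : s < N := hG _ (label_of_lab E).
  rewrite src_lookup_res //.
  case: ifP => ssg.
    by rewrite swapf_small // mem_filter ssg.
  by apply/esym/eqP; rewrite src_lookupN (swap_key sg eX hS sN) ssg andbF.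
have eh := hf_ext (G:=restrict_g sg X) (G':=X) erefl ef.
have memX : forall p, p \in gs X -> p.1 \in S.
  by move=> p /(map_f fst); rewrite -eX.
rewrite !par_gE /rename_g /restrict_g /=; congr Graph.
- by congr (_ + _); apply: eq_count => v; rewrite /freshf ef.
- by congr (_ ++ _); apply: eq_map => e /=; rewrite (eq_map eh).
have swI : injective (swapf N D) := inv_inj (swapfK N D).
rewrite filter_cat map_cat; congr (_ ++ _).
  have e1 : {in gs X, (fun p : nat * nat => p.1 \in [seq x <- S | x \in sg] ++
       map (swapf N D) (labels G)) =1 (fun p => p.1 \in sg)}.
    move=> p /memX pS /=; rewrite mem_cat mem_filter pS andbT.
    case: (boolP (p.1 \in sg)) => //= nsg.
    rewrite -{1}(swapfK N D p.1) mem_map //.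
    rewrite swapf_small ?(hS _ pS) // mem_filter nsg pS /=.
    by apply/negP => /hG; rewrite ltnNge leq_addl.
  rewrite (eq_in_filter e1) map_id_in // => p; rewrite mem_filter => /andP[ps pX].
  rewrite swapf_small ?(hS _ (memX _ pX)) // mem_filter ps /=.
  by case: p {ps pX}.
rewrite filter_map.
set l := [seq p <- [seq (swapf N D p.1, p.2) | p <- gs G] | p.1 \notin labels X].
rewrite [filter _ l](elimT all_filterP); last first.
  apply/allP => q; rewrite mem_filter => /andP[_ /mapP[r rG ->]] /=.
  by rewrite mem_cat map_f ?orbT // map_f.
rewrite /l filter_map -!map_comp; apply: map_filter_ext_in => p pG /=.
  by rewrite swapfK eh.
rewrite -/(restrict_g sg X) mem_labels_res (swap_key sg eX hS) -?eX //.
exact: hG (map_f fst pG).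
Qed.


Lemma count_lt (P : pred nat) x y : P x -> x < y ->
  count P (iota 0 x) < count P (iota 0 y).
Proof.
move=> Px xy; rewrite -(subnKC (ltnW xy)) iotaD count_cat /= add0n.
by rewrite -(subnSK xy) /= Px /= addnS ltnS leq_addr.
Qed.

Lemma count_le (P : pred nat) x y : x <= y ->
  count P (iota 0 x) <= count P (iota 0 y).
Proof. by move=> xy; rewrite -(subnKC xy) iotaD count_cat leq_addr. Qed.

Lemma count_inj (P : pred nat) x y : P x -> P y ->
  count P (iota 0 x) = count P (iota 0 y) -> x = y.
Proof.
move=> Px Py e; case: (ltngtP x y) => // h.
  by move: (count_lt Px h); rewrite e ltnn.
by move: (count_lt Py h); rewrite e ltnn.
Qed.

Lemma fused_src X Z v w : uniq (labels X) -> fusedf X Z v = Some w ->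
  exists s, label_of Z v = Some s /\ (s, w) \in gs X.
Proof.
move=> uX; rewrite /fusedf; case: (label_of Z v) => // s e.
by exists s; split => //; rewrite -src_lookupP // e.
Qed.

Lemma hf_fresh X Z v : freshf X Z v ->
  hf X Z v = gv X + count (freshf X Z) (iota 0 v).
Proof. by rewrite /freshf /hf => /eqP ->. Qed.

Lemma hf_fused X Z v w : fusedf X Z v = Some w -> hf X Z v = w.
Proof. by rewrite /hf => ->. Qed.

Lemma fresh_src X Z p : uniq (unzip2 (gs Z)) -> p \in gs Z ->
  p.1 \notin labels X -> freshf X Z p.2.
Proof.
case: p => s v /= u2 sv sX; rewrite /freshf /fusedf.
have /eqP -> : label_of Z v == Some s by rewrite label_ofP.
by rewrite src_lookupN.
Qed.

Lemma hf_inj X Z u v : freshf X Z u -> freshf X Z v -> hf X Z u = hf X Z v -> u = v.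
Proof.
move=> fu fv; rewrite !hf_fresh // => /addnI; exact: count_inj.
Qed.

Lemma wf_src_lt G p : wf ar G -> p \in gs G -> p.2 < gv G.
Proof. by case=> _ _ /allP h _ _ /h. Qed.

Lemma hf_lt X Z v : wf ar X -> v < gv Z -> hf X Z v < gv (par_g X Z).
Proof.
move=> wX vZ; rewrite par_gE /=.
case E: (fusedf X Z v) => [w|].
  have [s [_ sw]] := fused_src (let: And5 _ _ _ u _ := wX in u) E.
  rewrite (hf_fused E); apply: leq_trans (leq_addr _ _).
  exact: wf_src_lt wX sw.
rewrite hf_fresh /freshf ?E // ltn_add2l; apply: count_lt => //.
by rewrite /freshf E.
Qed.

Lemma hf_ge X Z v : freshf X Z v -> gv X <= hf X Z v.
Proof. by move=> f; rewrite hf_fresh // leq_addr. Qed.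

Lemma wf_par X Z : wf ar X -> wf ar Z -> wf ar (par_g X Z).
Proof.
move=> wX wZ; have [a1 a2 a3 a4 a5] := wX; have [b1 b2 b3 b4 b5] := wZ.
have hl : forall v, v < gv Z -> hf X Z v < gv X + count (freshf X Z) (iota 0 (gv Z)).
  by move=> v vZ; have := hf_lt wX vZ; rewrite par_gE.
split; rewrite par_gE /=.
- rewrite all_cat a1 /=; apply/allP => e /mapP[f fZ ->] /=.
  by rewrite size_map; exact: (allP b1).
- rewrite all_cat; apply/andP; split.
    apply/allP => e eX; apply/allP => v vX; apply: leq_trans (leq_addr _ _).
    exact: (allP (allP a2 e eX)).
  apply/allP => e /mapP[f fZ ->] /=; apply/allP => v /mapP[u uf ->].
  by apply: hl; exact: (allP (allP b2 f fZ)).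
- rewrite all_cat; apply/andP; split.
    by apply/allP => p pX; apply: leq_trans (leq_addr _ _); exact: (allP a3).
  apply/allP => q /mapP[p]; rewrite mem_filter => /andP[_ pZ] -> /=.
  by apply: hl; exact: (allP b3).
- rewrite /unzip1 map_cat cat_uniq a4 /=; apply/andP; split.
    by apply/hasPn => s /mapP[q /mapP[p]]; rewrite mem_filter => /andP[pX _] -> ->.
  rewrite -map_comp /=; apply: (subseq_uniq _ b4).
  by apply: map_subseq; exact: filter_subseq.
- rewrite /unzip2 map_cat cat_uniq a5 /=; apply/andP; split.
    apply/hasPn => s /mapP[q /mapP[p]]; rewrite mem_filter => /andP[pX pZ] -> -> /=.
    apply/negP => /mapP[r rX /esym e].
    have := hf_ge (fresh_src b5 pZ pX); rewrite -e leqNgt.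
    by rewrite (allP a3 r rX).
  rewrite -map_comp; rewrite map_inj_in_uniq.
    exact: filter_uniq (uniq_fst b4).
  move=> p q; rewrite !mem_filter => /andP[pX pZ] /andP[qX qZ] /= e.
  apply: (uniq_map_inj b5 pZ qZ).
  exact: hf_inj (fresh_src b5 pZ pX) (fresh_src b5 qZ qX) e.
Qed.


Lemma wf_ren al G : wf ar G -> wf ar (rename_g al G).
Proof.
case=> a1 a2 a3 a4 a5; split => //=.
- by apply/allP => q /mapP[p pG ->] /=; exact: (allP a3).
- by rewrite (labels_ren al G : unzip1 _ = _) map_inj_uniq //; exact: can_inj (fp_Kinv al).
- by rewrite (unzip2_ren al G).
Qed.

Lemma wf_res tau G : wf ar G -> wf ar (restrict_g tau G).
Proof.
case=> a1 a2 a3 a4 a5; split => //=.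
- by apply/allP => p; rewrite mem_filter => /andP[_ /(allP a3)].
- by apply: (subseq_uniq _ a4); apply: map_subseq; exact: filter_subseq.
- by apply: (subseq_uniq _ a5); apply: map_subseq; exact: filter_subseq.
Qed.


Lemma wf_zero tau : wf ar (zero_g A tau).
Proof.
rewrite /zero_g; set u := undup tau.
have s1 : size u <= size (iota 0 (size u)) by rewrite size_iota.
split => //=.
- apply/allP => p /(map_f snd); rewrite /= -/(unzip2 _) unzip2_zip ?size_iota //.
  by rewrite mem_iota.
- by rewrite unzip1_zip // undup_uniq.
- by rewrite unzip2_zip ?size_iota // iota_uniq.
Qed.

Lemma wf_edge a (ss : (ar a).-tuple nat) : wf ar (edge_g a ss).
Proof.
rewrite /edge_g; set u := undup ss.
have s1 : size u <= size (iota 0 (size u)) by rewrite size_iota.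
split => //=.
- by rewrite size_map size_tuple eqxx.
- rewrite andbT; apply/allP => v /mapP[s sin ->].
  by rewrite index_mem mem_undup.
- apply/allP => p /(map_f snd); rewrite /= -/(unzip2 _) unzip2_zip ?size_iota //.
  by rewrite mem_iota.
- by rewrite unzip1_zip // undup_uniq.
- by rewrite unzip2_zip ?size_iota // iota_uniq.
Qed.


Lemma mem_fst_filter (s : seq (nat * nat)) (L : seq nat) x :
  (x \in [seq p.1 | p <- s & p.1 \notin L]) = (x \in unzip1 s) && (x \notin L).
Proof.
elim: s => [|p s IH] //=; case: ifP => /= pL; rewrite !in_cons IH.
  by case: eqP => // ->; rewrite pL.
by case: eqP => // ->; rewrite pL andbF.
Qed.

Lemma mem_labels_par X Z x :
  (x \in labels (par_g X Z)) = (x \in labels X) || (x \in labels Z).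
Proof.
rewrite /labels par_gE /= /unzip1 map_cat mem_cat -map_comp.
rewrite (mem_fst_filter (gs Z) (labels X) x).
rewrite -/(labels X) /labels; by case: (x \in unzip1 (gs X)); rewrite /= ?andbT.
Qed.

Lemma src_lookup_par X Z s : wf ar X -> wf ar Z ->
  src_lookup (par_g X Z) s =
  if s \in labels X then src_lookup X s else omap (hf X Z) (src_lookup Z s).
Proof.
move=> wX wZ; have [_ _ _ a4 _] := wX; have [_ _ _ b4 _] := wZ.
have [_ _ _ c4 _] := wf_par wX wZ.
apply: opt_eq => w; rewrite src_lookupP // par_gE /= mem_cat.
case: ifP => sX.
  rewrite src_lookupP // orbC; case: (boolP ((s, w) \in _)) => //= /mapP[p].
  by rewrite mem_filter => /andP[pX _] [e _]; move: pX; rewrite -e sX.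
have -> : ((s, w) \in gs X) = false.
  by apply/negP => /(map_f fst) /=; rewrite -/(labels X) sX.
rewrite /=; case E: (src_lookup Z s) => [z|] /=.
  have sz : (s, z) \in gs Z by rewrite -src_lookupP // E.
  apply/idP/idP; last first.
    move/eqP=> [<-]; apply/mapP; exists (s, z) => //.
    by rewrite mem_filter sX sz.
  case/mapP => p; rewrite mem_filter => /andP[_ pZ] [e1 e2].
  have ep : p = (s, z) by apply: (uniq_map_inj b4 pZ sz); rewrite /= e1.
  by rewrite e2 ep.
apply/negP => /mapP[p]; rewrite mem_filter => /andP[_ pZ] [e1 _].
move: E => /eqP; rewrite src_lookupN => /negP; apply.
by rewrite e1; exact: map_f.
Qed.


Section Assoc.
Variables X Z G : graph A.
Hypotheses (wX : wf ar X) (wZ : wf ar Z) (wG : wf ar G).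
Let W := par_g X Z.
Let M := par_g Z G.
Let wW : wf ar W := wf_par wX wZ.
Let wM : wf ar M := wf_par wZ wG.

Lemma F1 m : m < gv Z -> label_of M m = label_of Z m.
Proof.
move=> mZ; have [_ _ _ _ c5] := wM; have [_ _ b3 _ b5] := wZ.
have [_ _ _ _ g5] := wG.
apply: opt_eq => s; rewrite !label_ofP //.
rewrite /M par_gE /= mem_cat; case: (boolP ((s, m) \in gs Z)) => //= _.
apply/negP => /mapP[p]; rewrite mem_filter => /andP[pX pZ] [_ e].
have := hf_ge (fresh_src g5 pZ pX).
by rewrite -e leqNgt mZ.
Qed.

Lemma F1f m : m < gv Z -> fusedf X M m = fusedf X Z m.
Proof. by move=> mZ; rewrite /fusedf F1. Qed.

Lemma F2 g : freshf Z G g -> label_of M (hf Z G g) = label_of G g.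
Proof.
move=> fg; have [_ _ _ _ c5] := wM; have [_ _ b3 _ b5] := wZ.
have [_ _ _ _ g5] := wG.
apply: opt_eq => s; rewrite !label_ofP //.
rewrite /M par_gE /= mem_cat.
have -> : ((s, hf Z G g) \in gs Z) = false.
  apply/negP => /(allP b3) /=; rewrite ltnNge.
  by rewrite hf_ge.
rewrite /=; apply/idP/idP.
  case/mapP => p; rewrite mem_filter => /andP[pX pZ] [e1 e2].
  have fp := fresh_src g5 pZ pX.
  by rewrite e1 (hf_inj fg fp e2) -surjective_pairing.
move=> sg; apply/mapP; exists (s, g) => //.
rewrite mem_filter sg andbT /=.
move: fg; rewrite /freshf /fusedf.
have /eqP -> : label_of G g == Some s by rewrite label_ofP.
by rewrite src_lookupN.
Qed.

Lemma fusedWG g : fusedf W G g = match label_of G g with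
  | Some s => if s \in labels X then src_lookup X s else omap (hf X Z) (src_lookup Z s)
  | None => None end.
Proof. by rewrite /fusedf; case: (label_of G g) => // s; rewrite src_lookup_par. Qed.

Lemma P2 g : ~~ freshf Z G g -> ~~ freshf W G g.
Proof.
rewrite /freshf fusedWG /fusedf.
case: (label_of G g) => // s; case E: (src_lookup Z s) => [z|] //= _.
case: ifP => // sX; by rewrite src_lookupN sX.
Qed.

Lemma P1 g : freshf Z G g -> freshf X M (hf Z G g) = freshf W G g.
Proof.
move=> fg; rewrite /freshf {1}/fusedf F2 // fusedWG.
move: fg; rewrite /freshf /fusedf.
case: (label_of G g) => // s /eqP E; rewrite E /=.
case: ifP => // sX; by rewrite src_lookupN sX.
Qed.

Lemma K g : count (freshf X M) (iota 0 (gv Z + count (freshf Z G) (iota 0 g))) =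
  count (freshf X Z) (iota 0 (gv Z)) + count (freshf W G) (iota 0 g).
Proof.
have iS : forall (P : pred nat) n, count P (iota 0 (n + 1)) = count P (iota 0 n) + P n.
  by move=> P n; rewrite iotaD count_cat /= add0n addn0.
elim: g => [|g IH].
  rewrite /= !addn0; apply: eq_in_count => m; rewrite mem_iota add0n => mZ.
  by rewrite /freshf F1f.
rewrite -addn1 !iS.
case: (boolP (freshf Z G g)) => fg.
  rewrite addnA iS IH -addnA; congr (_ + (_ + _)).
  by rewrite -hf_fresh // P1.
by rewrite (negbTE (P2 fg)) /= !addn0.
Qed.

Lemma hXM_Z m : m < gv Z -> hf X M m = hf X Z m.
Proof.
move=> mZ; rewrite /hf F1f //; case: (fusedf X Z m) => // .
congr (_ + _); apply: eq_in_count => v; rewrite mem_iota add0n => vm.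
by rewrite /freshf F1f // (ltn_trans vm mZ).
Qed.

Lemma hXM_G g : hf X M (hf Z G g) = hf W G g.
Proof.
have [_ _ a3 a4 _] := wX; have [_ _ b3 b4 b5] := wZ.
case E: (fusedf Z G g) => [z|].
  have [s [ls sz]] := fused_src b4 E.
  rewrite (hf_fused E) hXM_Z; last exact: (wf_src_lt wZ sz).
  have lz : label_of Z z = Some s by apply/eqP; rewrite label_ofP.
  rewrite {2}/hf fusedWG ls.
  case: ifP => sX.
    case E2: (src_lookup X s) => [x|]; last by move: E2 => /eqP; rewrite src_lookupN sX.
    by rewrite (@hf_fused _ _ z x) // /fusedf lz.
  by have /eqP -> : src_lookup Z s == Some z by rewrite src_lookupP.
have fg : freshf Z G g by rewrite /freshf E.
case: (boolP (freshf W G g)) => fW.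
  rewrite hf_fresh; last by rewrite P1.
  by rewrite (hf_fresh fg) K (hf_fresh fW) /W par_gE /= addnA.
move: fW; rewrite /freshf; case E3: (fusedf W G g) => [w|] // _.
rewrite (hf_fused E3); apply: hf_fused; rewrite /fusedf F2 //.
move: E3; rewrite fusedWG; move: fg; rewrite /freshf /fusedf.
case: (label_of G g) => // s /eqP ->; case: ifP => // .
Qed.

Lemma par_assoc : par_g (par_g X Z) G = par_g X (par_g Z G).
Proof.
have [a1 a2 a3 a4 a5] := wX; have [b1 b2 b3 b4 b5] := wZ.
have [g1 g2 g3 g4 g5] := wG.
rewrite -/W -/M [par_g W G]par_gE [par_g X M]par_gE.
congr Graph.
- rewrite {1}/W par_gE /= -addnA; congr (_ + _).
  by rewrite /M par_gE /= K.
- rewrite /W par_gE /= -catA; congr (_ ++ _).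
  rewrite /M par_gE /= map_cat; congr (_ ++ _).
    apply/eq_in_map => e eZ /=; congr (_, _); apply/eq_in_map => v vZ.
    by rewrite hXM_Z //; exact: (allP (allP b2 e eZ)).
  rewrite -map_comp; apply: eq_map => e /=; rewrite -map_comp.
  by congr (_, _); apply: eq_map => v /=; rewrite hXM_G.
rewrite /W par_gE /= -catA; congr (_ ++ _).
rewrite /M par_gE /= filter_cat map_cat; congr (_ ++ _).
  apply: map_filter_ext_in => p pZ //=.
  by rewrite hXM_Z //; exact: (allP b3).
rewrite filter_map -filter_predI -map_comp.
apply: map_filter_ext_in => p pG /=; first by rewrite hXM_G.
by rewrite -/W mem_labels_par negb_or andbC.
Qed.

End Assoc.


Lemma count_mem_iota (T : seq nat) n : uniq T -> all (fun x => x < n) T ->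
  count (mem T) (iota 0 n) = size T.
Proof.
move=> uT aT; rewrite -size_filter; apply: perm_size.
apply: uniq_perm => //; first by rewrite filter_uniq // iota_uniq.
move=> x; rewrite mem_filter mem_iota add0n /=; case xT: (x \in T) => //=.
exact: (allP aT x xT).
Qed.

Lemma count_mem_sym (L1 L2 : seq nat) : uniq L1 -> uniq L2 ->
  count (mem L1) L2 = count (mem L2) L1.
Proof.
move=> u1 u2; rewrite -!size_filter; apply: perm_size.
apply: uniq_perm; rewrite ?filter_uniq // => x.
by rewrite !mem_filter andbC.
Qed.

Lemma index_filter_iota (P : pred nat) n v : v < n -> P v ->
  index v (filter P (iota 0 n)) = count P (iota 0 v).
Proof.
move=> vn Pv; rewrite -(subnKC (ltnW vn)) iotaD filter_cat index_cat.
rewrite mem_filter mem_iota ltnn andbF /= add0n size_filter.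
by rewrite -(subnSK vn) /= Pv /= eqxx addn0.
Qed.

Lemma hf_inj_gen Z X u v : wf ar Z -> wf ar X -> hf Z X u = hf Z X v -> u = v.
Proof.
move=> wZ wX; have [_ _ _ b4 b5] := wZ; have [_ _ _ a4 a5] := wX.
case Eu: (fusedf Z X u) => [zu|]; case Ev: (fusedf Z X v) => [zv|].
- rewrite (hf_fused Eu) (hf_fused Ev) => ezz; subst zv.
  move: Eu Ev; rewrite /fusedf.
  case Lu: (label_of X u) => [s|] //; case Lv: (label_of X v) => [t|] //.
  move/eqP; rewrite src_lookupP // => sz; move/eqP; rewrite src_lookupP // => tz.
  have est : s = t by have := uniq_map_inj b5 sz tz erefl; case.
  subst t; move/eqP: Lu; rewrite label_ofP // => su.
  move/eqP: Lv; rewrite label_ofP // => sv.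
  by have := uniq_map_inj a4 su sv erefl; case.
- have [s [_ sz]] := fused_src b4 Eu.
  rewrite (hf_fused Eu) hf_fresh ?/freshf ?Ev // => e.
  by move: (wf_src_lt wZ sz); rewrite /= e ltnNge leq_addr.
- have [s [_ sz]] := fused_src b4 Ev.
  rewrite (hf_fused Ev) hf_fresh ?/freshf ?Eu // => e.
  by move: (wf_src_lt wZ sz); rewrite /= -e ltnNge leq_addr.
- by apply: hf_inj; rewrite /freshf ?Eu ?Ev.
Qed.

Section Comm.
Variables X Z : graph A.
Hypotheses (wX : wf ar X) (wZ : wf ar Z).

Lemma nonfresh_count :
  count (predC (freshf X Z)) (iota 0 (gv Z)) = count (mem (labels X)) (labels Z).
Proof.
have [_ _ b3 b4 b5] := wZ; have [_ _ _ a4 _] := wX.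
set T := map snd [seq p <- gs Z | p.1 \in labels X].
have e : {in iota 0 (gv Z), predC (freshf X Z) =1 mem T}.
  move=> v _ /=; rewrite /freshf /fusedf.
  case E: (label_of Z v) => [s|].
    move/eqP: E; rewrite label_ofP // => sv.
    rewrite src_lookupN negbK; apply/idP/idP => [sX|].
      by apply/mapP; exists (s, v) => //; rewrite mem_filter sX.
    case/mapP => p; rewrite mem_filter => /andP[pX pZ] ev.
    have ep : p = (s, v) by apply: (uniq_map_inj b5 pZ sv); rewrite /= ev.
    by rewrite ep in pX.
  move/eqP: E; rewrite label_ofN => vn /=; apply/esym/negP => /mapP[p].
  rewrite mem_filter => /andP[_ pZ] ev; move/negP: vn; apply.
  by rewrite ev; exact: map_f.
rewrite (eq_in_count e) count_mem_iota.
- by rewrite size_map size_filter /labels count_map.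
- by apply: (subseq_uniq _ b5); apply: map_subseq; exact: filter_subseq.
- apply/allP => v /mapP[p]; rewrite mem_filter => /andP[_ pZ] ->.
  exact: (allP b3).
Qed.

Lemma fresh_count :
  count (freshf X Z) (iota 0 (gv Z)) = gv Z - count (mem (labels X)) (labels Z).
Proof.
have := count_predC (freshf X Z) (iota 0 (gv Z)).
by rewrite size_iota nonfresh_count => e; rewrite -{2}e addnK.
Qed.

End Comm.


Lemma gv_comm X Z : wf ar X -> wf ar Z -> gv (par_g X Z) = gv (par_g Z X).
Proof.
move=> wX wZ; have [_ _ _ a4 _] := wX; have [_ _ _ b4 _] := wZ.
rewrite !par_gE /= (fresh_count wX wZ) (fresh_count wZ wX).
rewrite (count_mem_sym a4 b4).
have k1 : count (mem (labels Z)) (labels X) <= gv Z.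
  rewrite -(count_mem_sym a4 b4) -(nonfresh_count wX wZ).
  by apply: leq_trans (count_size _ _) _; rewrite size_iota.
have k2 : count (mem (labels Z)) (labels X) <= gv X.
  rewrite -(nonfresh_count wZ wX).
  by apply: leq_trans (count_size _ _) _; rewrite size_iota.
rewrite /labels in k1 k2 *; lia.
Qed.

Lemma par_comm_iso X Z : wf ar X -> wf ar Z -> iso (par_g X Z) (par_g Z X).
Proof.
move=> wX wZ; have [a1 a2 a3 a4 a5] := wX; have [b1 b2 b3 b4 b5] := wZ.
set Fr := filter (freshf X Z) (iota 0 (gv Z)).
pose f w := if w < gv X then hf Z X w else nth 0 Fr (w - gv X).
have uFr : uniq Fr by rewrite filter_uniq // iota_uniq.
have sFr : size Fr = count (freshf X Z) (iota 0 (gv Z)) by rewrite size_filter.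
have Fr_prop : forall r, r < size Fr ->
    [/\ nth 0 Fr r < gv Z, freshf X Z (nth 0 Fr r) & hf X Z (nth 0 Fr r) = gv X + r].
  move=> r rs; have := mem_nth 0 rs; rewrite mem_filter mem_iota add0n => /andP[fr lt].
  split => //; rewrite hf_fresh // -(index_filter_iota lt fr).
  by rewrite index_uniq.
have fh : forall v, v < gv Z -> f (hf X Z v) = v.
  move=> v vZ; case E: (fusedf X Z v) => [x|].
    have [s [ls sx]] := fused_src a4 E.
    rewrite (hf_fused E) /f (wf_src_lt wX sx); apply: hf_fused; rewrite /fusedf.
    have -> : label_of X x = Some s by apply/eqP; rewrite label_ofP.
    by apply/eqP; rewrite src_lookupP // -label_ofP // ls.
  have fv : freshf X Z v by rewrite /freshf E.
  rewrite /f hf_fresh // ltnNge leq_addr /= addKn -(index_filter_iota vZ fv).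
  by rewrite nth_index // mem_filter fv mem_iota.
have gvE := gv_comm wX wZ.
have mixed : forall u r, u < gv X -> r < size Fr -> hf Z X u <> nth 0 Fr r.
  move=> u r uX rs; have [zZ zf _] := Fr_prop r rs.
  case E: (fusedf Z X u) => [z|].
    rewrite (hf_fused E) => ez; move: E; rewrite /fusedf.
    case Lu: (label_of X u) => [s|] //; move/eqP; rewrite src_lookupP // ez => sz.
    move: zf; rewrite /freshf /fusedf.
    have -> : label_of Z (nth 0 Fr r) = Some s by apply/eqP; rewrite label_ofP.
    by rewrite src_lookupN (label_of_lab Lu).
  rewrite hf_fresh ?/freshf ?E // => e; move: zZ; rewrite -e.
  by rewrite ltnNge leq_addr.
exists f; split.
- exact: gvE.
- move=> w wn; case: (ltnP w (gv X)) => wX'.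
    by rewrite /f wX'; apply: hf_lt.
  move: wn; rewrite par_gE /= => wn.
  have rs : w - gv X < size Fr by rewrite sFr ltn_subLR.
  have [zZ _ _] := Fr_prop _ rs.
  rewrite /f (leq_gtF wX') /=; exact: leq_trans zZ (leq_addr _ _).
- move=> u v; rewrite par_gE /= => un vn.
  have ru : gv X <= u -> u - gv X < size Fr by move=> h; rewrite sFr ltn_subLR.
  have rv : gv X <= v -> v - gv X < size Fr by move=> h; rewrite sFr ltn_subLR.
  rewrite /f; case: (ltnP u (gv X)) => uX; case: (ltnP v (gv X)) => vX.
  + exact: hf_inj_gen.
  + by move/(mixed _ _ uX (rv vX)).
  + by move/esym/(mixed _ _ vX (ru uX)).
  + move/eqP; rewrite nth_uniq ?ru ?rv // => /eqP e.
    by rewrite -(subnK uX) -(subnK vX) e.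
- rewrite par_gE par_gE /= map_cat.
  have -> : [seq (e.1, [seq f i | i <- e.2]) | e <- ge X] =
            [seq (e.1, [seq hf Z X i | i <- e.2]) | e <- ge X].
    apply/eq_in_map => e eX /=; congr (_, _); apply/eq_in_map => v vX.
    by rewrite /f (allP (allP a2 e eX) v vX).
  have -> : [seq (e.1, [seq f i | i <- e.2])
               | e <- [seq (e.1, [seq hf X Z i | i <- e.2]) | e <- ge Z]] = ge Z.
    rewrite -map_comp; apply: map_id_in => e eZ /=.
    rewrite -map_comp map_id_in; first by case: e {eZ}.
    by move=> v vZ /=; apply: fh; exact: (allP (allP b2 e eZ) v vZ).
  by rewrite perm_catC.
have [_ _ _ c4 _] := wf_par wX wZ; have [_ _ _ _ d5] := wf_par wZ wX.
have [_ _ _ d4 _] := wf_par wZ wX.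
apply: uniq_perm => //.
  apply: uniq_fst.
  have -> : unzip1 [seq (p.1, f p.2) | p <- gs (par_g X Z)] = unzip1 (gs (par_g X Z)).
    by elim: (gs _) => //= p l ->.
  exact: c4.
  exact: (uniq_fst d4).
move=> [s w].
pose g := fun p : nat * nat => (p.1, hf Z X p.2).
have Q1 : s \in labels Z -> ((s, w) \in map g (gs X)) = ((s, w) \in gs Z) && (s \in labels X).
  move=> sZ; apply/idP/idP.
    case/mapP => p pX [e1 e2].
    case E: (src_lookup Z s) => [z|]; last by move: E => /eqP; rewrite src_lookupN sZ.
    have lp : label_of X p.2 = Some p.1 by apply/eqP; rewrite label_ofP // -surjective_pairing.
    have hz : hf Z X p.2 = z by apply: hf_fused; rewrite /fusedf lp -e1 E.
    rewrite e2 hz -src_lookupP // E eqxx /= e1.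
    exact: map_f.
  case/andP => sw sX.
  case E: (src_lookup X s) => [x|]; last by move: E => /eqP; rewrite src_lookupN sX.
  have sx : (s, x) \in gs X by rewrite -src_lookupP // E.
  apply/mapP; exists (s, x) => //; rewrite /g /=; congr (_, _).
  apply/esym/hf_fused; rewrite /fusedf.
  have -> : label_of X x = Some s by apply/eqP; rewrite label_ofP.
  by apply/eqP; rewrite src_lookupP.
have Q2 : s \notin labels Z ->
    ((s, w) \in map g (gs X)) = ((s, w) \in map g [seq p <- gs X | p.1 \notin labels Z]).
  move=> sZ; apply/idP/idP.
    case/mapP => p pX e; apply/mapP; exists p => //.
    by move: e => [e1 _]; rewrite mem_filter -e1 sZ pX.
  by case/mapP => p; rewrite mem_filter => /andP[_ pX] e; apply/mapP; exists p.
have Q3 : s \in labels Z -> (s, w) \notin map g [seq p <- gs X | p.1 \notin labels Z].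
  move=> sZ; apply/negP => /mapP[p]; rewrite mem_filter => /andP[pZ _] [e1 _].
  by move: pZ; rewrite -e1 sZ.
have Q4 : s \notin labels Z -> (s, w) \notin gs Z.
  by move=> sZ; apply/negP => /(map_f fst) /=; rewrite -/(labels Z) (negbTE sZ).
rewrite !par_gE /= map_cat mem_cat mem_cat -map_comp.
have -> : [seq (p.1, f p.2) | p <- gs X] = map g (gs X).
  by apply/eq_in_map => p pX; rewrite /f /g (allP a3 p pX).
have -> : [seq ((fun p : nat * nat => (p.1, f p.2)) \o (fun p : nat * nat => (p.1, hf X Z p.2))) i
             | i <- gs Z & i.1 \notin labels X] = [seq p <- gs Z | p.1 \notin labels X].
  apply: map_id_in => p; rewrite mem_filter => /andP[_ pZ] /=.
  by rewrite fh ?(allP b3 p pZ) // -surjective_pairing.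
rewrite mem_filter /=.
case: (boolP (s \in labels Z)) => sZ.
  rewrite Q1 // (negbTE (Q3 sZ)) orbF.
  by case: ((s, w) \in gs Z); case: (s \in labels X).
rewrite Q2 // (negbTE (Q4 sZ)). by rewrite andbF orbF.
Qed.


Lemma iso_res tau G H : iso G H -> iso (restrict_g tau G) (restrict_g tau H).
Proof.
case=> f [e1 e2 e3 e4 e5]; exists f; split => //=.
have := perm_filter (fun p : nat * nat => p.1 \in tau) e5.
by rewrite filter_map.
Qed.

Lemma iso_ren al G H : iso G H -> iso (rename_g al G) (rename_g al H).
Proof.
case=> f [e1 e2 e3 e4 e5]; exists f; split => //=.
have := perm_map (fun p : nat * nat => (fp_inv al p.1, p.2)) e5.
by rewrite -!map_comp.
Qed.

Lemma par_zero X : par_g X (zero_g A [::]) =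
  Graph (gv X + 0) (ge X ++ [::]) (gs X ++ [::]).
Proof. by []. Qed.

Lemma base_eq X (S : seq nat) : labels X =i S ->
  rename_g fp_id (restrict_g S (par_g X (zero_g A [::]))) = X.
Proof.
move=> eX; rewrite par_zero /rename_g /restrict_g /= addn0 !cats0.
rewrite (eq_in_filter (a2 := predT)); last first.
  by move=> p pX /=; rewrite -eX; exact: map_f.
rewrite filter_predT map_id_in; first by case: X {eX}.
by move=> p _; case: p.
Qed.


Lemma lt_foldr_max (s : seq nat) x : x \in s -> x < (foldr maxn 0 s).+1.
Proof.
elim: s => //= y s IH; rewrite in_cons ltnS => /orP[/eqP->|/IH]; first exact: leq_maxl.
by rewrite ltnS => h; apply: leq_trans h (leq_maxr _ _).
Qed.

Section Main.
Variable L : graph A -> Prop.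
Hypothesis HL : iso_invariant ar L.

Definition Rel X Y := same_sort X Y /\ forall G al tau, wf ar G ->
  (L (rename_g al (restrict_g tau (par_g X G))) <->
   L (rename_g al (restrict_g tau (par_g Y G)))).

Lemma Rel_refl X : Rel X X.
Proof. by split. Qed.

Lemma Rel_trans X Y Z : Rel X Y -> Rel Y Z -> Rel X Z.
Proof.
case=> s1 h1 [s2 h2]; split; first by move=> x; rewrite s1 s2.
by move=> G al tau wG; rewrite h1 // h2.
Qed.

Lemma Rel_L X Y : Rel X Y -> L X <-> L Y.
Proof.
case=> sXY h.
have := h (zero_g A [::]) fp_id (labels X) (wf_zero _).
rewrite base_eq // base_eq //.
Qed.

Lemma Rel_par_l X Y Z : wf ar X -> wf ar Y -> wf ar Z -> Rel X Y ->
  Rel (par_g X Z) (par_g Y Z).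
Proof.
move=> wX wY wZ [sXY h]; split.
  by move=> x; rewrite !mem_labels_par sXY.
move=> G al tau wG; rewrite !par_assoc //; apply: h; exact: wf_par.
Qed.

Lemma Lchain W Z G al tau : wf ar W -> wf ar Z -> wf ar G ->
  L (rename_g al (restrict_g tau (par_g (par_g Z W) G))) ->
  L (rename_g al (restrict_g tau (par_g W (par_g G Z)))).
Proof.
move=> wW wZ wG h.
have wZW := wf_par wZ wW; have wGZ := wf_par wG wZ.
have h2 : L (rename_g al (restrict_g tau (par_g G (par_g Z W)))).
  apply: HL h; do ?[apply: wf_ren; apply: wf_res; apply: wf_par => //].
  by apply: iso_ren; apply: iso_res; apply: par_comm_iso.
rewrite -par_assoc // in h2.
apply: HL h2; do ?[apply: wf_ren; apply: wf_res; apply: wf_par => //].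
by apply: iso_ren; apply: iso_res; apply: par_comm_iso.
Qed.

Lemma Lchain' W Z G al tau : wf ar W -> wf ar Z -> wf ar G ->
  L (rename_g al (restrict_g tau (par_g W (par_g G Z)))) ->
  L (rename_g al (restrict_g tau (par_g (par_g Z W) G))).
Proof.
move=> wW wZ wG h.
have wZW := wf_par wZ wW; have wGZ := wf_par wG wZ.
have h2 : L (rename_g al (restrict_g tau (par_g (par_g G Z) W))).
  apply: HL h; do ?[apply: wf_ren; apply: wf_res; apply: wf_par => //].
  by apply: iso_ren; apply: iso_res; apply: par_comm_iso.
rewrite par_assoc // in h2.
apply: HL h2; do ?[apply: wf_ren; apply: wf_res; apply: wf_par => //].
by apply: iso_ren; apply: iso_res; apply: par_comm_iso.
Qed.

Lemma Rel_par_r X Y Z : wf ar X -> wf ar Y -> wf ar Z -> Rel X Y ->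
  Rel (par_g Z X) (par_g Z Y).
Proof.
move=> wX wY wZ [sXY h]; split.
  by move=> x; rewrite !mem_labels_par sXY.
move=> G al tau wG; split => H.
  apply: Lchain' => //; apply/(h _ _ _ (wf_par wG wZ)); exact: Lchain.
apply: Lchain' => //; apply/(h _ _ _ (wf_par wG wZ)); exact: Lchain.
Qed.

Lemma Rel_ren g X Y : wf ar X -> wf ar Y -> Rel X Y -> Rel (rename_g g X) (rename_g g Y).
Proof.
move=> wX wY [sXY h]; split.
  move=> x; rewrite !labels_ren; apply/mapP/mapP => -[y yin ->]; exists y => //.
    by rewrite -sXY.
  by rewrite sXY.
move=> G al tau wG; rewrite !ren_par !res_ren !ren_ren.
apply: h; exact: wf_ren.
Qed.

Lemma Rel_res sg X Y : wf ar X -> wf ar Y -> Rel X Y -> Rel (restrict_g sg X) (restrict_g sg Y).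
Proof.
move=> wX wY [sXY h]; split.
  by move=> x; rewrite !mem_labels_res sXY.
move=> G al tau wG.
have [_ _ _ a4 _] := wX; have [_ _ _ b4 _] := wY.
set N := (foldr maxn 0 (labels X ++ labels G)).+1.
have hS : forall x, x \in labels X -> x < N.
  by move=> x xX; apply: lt_foldr_max; rewrite mem_cat xX.
have hG : forall x, x \in labels G -> x < N.
  by move=> x xG; apply: lt_foldr_max; rewrite mem_cat xG orbT.
rewrite (res_par sg a4 (fun x => erefl) hS hG).
have sYX : labels Y =i labels X by move=> x; rewrite sXY.
rewrite (res_par sg b4 sYX hS hG).
rewrite !res_ren !ren_ren !res_res.
apply: h; exact: wf_ren.
Qed.

End Main.

End Basics.

Unset Implicit Arguments.
Set Strict Implicit.

Theorem lemma7p1 (A : eqType) (ar : A -> nat) (L : graph A -> Prop)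
  (HL : iso_invariant ar L) (G1 G2 : graph A) (w1 : wf ar G1) (w2 : wf ar G2) :
  syn_cong ar L G1 G2 <->
  (same_sort G1 G2 /\
   forall (G : graph A) (al : finperm) (tau : seq nat), wf ar G ->
     (L (rename_g al (restrict_g tau (par_g G1 G))) <->
      L (rename_g al (restrict_g tau (par_g G2 G))))).
Proof.
split.
  case=> sS h; split => // G al tau wG.
  exact: (h (TRename al (TRestrict tau (TPar (TVar ar 0) (TVar ar 1)))) (fun _ => G)).
case=> sS h; split => // t c wc.
suff : [/\ wf ar (eval (env_of G1 c) t), wf ar (eval (env_of G2 c) t) &
          @Rel A ar L (eval (env_of G1 c) t) (eval (env_of G2 c) t)].
  by case=> _ _ r; exact: (Rel_L r).
elim: t => [i|tau|a ss|tau t [IH1 IH2 IH3]|al t [IH1 IH2 IH3]|t1 [a1 a2 a3] t2 [b1 b2 b3]] /=.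
- rewrite /env_of; case: eqP => _; first by split.
  by split => //; exact: Rel_refl.
- by split; [exact: wf_zero | exact: wf_zero | exact: Rel_refl].
- by split; [exact: wf_edge | exact: wf_edge | exact: Rel_refl].
- by split; [exact: wf_res | exact: wf_res | exact: Rel_res].
- by split; [exact: wf_ren | exact: wf_ren | exact: Rel_ren].
split; [exact: wf_par | exact: wf_par |].
apply: (@Rel_trans _ _ _ _ (par_g (eval (env_of G2 c) t1) (eval (env_of G1 c) t2))).
  exact: Rel_par_l.
exact: Rel_par_r.
Qed.
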